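(* Let $a$ be a smooth, positive, increasing function on $(0,\infty)$ and consider the two-dimensional Robertson–Walker spacetime $ds^2=-dt^2+a^2(t)\,d\chi^2$, $t>0$, $\chi\in\mathbb{R}$, with comoving worldlines $\beta_0:\chi=0$, $\beta_1:\chi=\chi_1$, $\beta_2:\chi=\chi_2$. Consider any one of the following three configurations (all named events assumed to exist). Scenario I: Fix $\tau_0>0$. The spacelike geodesic orthogonal to $\beta_0$ at $(\tau_0,0)$ meets $\beta_1$ at $q=(\tau_1,\chi_1)$ and $\beta_2$ at $s=(t^-,\chi_2)$; the spacelike geodesic orthogonal to $\beta_1$ at $(\tau_1,\chi_1)$ meets $\beta_2$ at $s'=(t^+,\chi_2)$. Velocities: $v_{\mathrm{Fermi}1}$ of $\beta_1$ relative to $\beta_0$ at proper time $\tau_0$ (computed at $q$), $v_{\mathrm{Fermi}3}$ of $\beta_2$ relative to $\beta_0$ at proper time $\tau_0$ (computed at $s$), $v_{\mathrm{Fermi}2}$ of $\beta_2$ relative to $\beta_1$ at proper time $\tau_1$ (computed at $s'$). Scenario II: The spacelike geodesic orthogonal to $\beta_0$ at $(t^-,0)$ meets $\beta_1$ at $q=(\tau_1,\chi_1)$; the spacelike geodesic orthogonal to $\beta_1$ at $q$ meets $\beta_2$ at $s=(\tau_2,\chi_2)$; and $s$ lies on the spacelike geodesic orthogonal to $\beta_0$ at $(t^+,0)$. Velocities: $v_{\mathrm{Fermi}1}$ of $\beta_1$ relative to $\beta_0$ at proper time $t^-$ (at $q$), $v_{\mathrm{Fermi}2}$ of $\beta_2$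 relative to $\beta_1$ at proper time $\tau_1$ (at $s$), $v_{\mathrm{Fermi}3}$ of $\beta_2$ relative to $\beta_0$ at proper time $t^+$ (at $s$). Scenario III: Fix $\tau_0>0$. The spacelike geodesic orthogonal to $\beta_0$ at $(\tau_0,0)$ meets $\beta_1$ at $q=(t^+,\chi_1)$ and $\beta_2$ at $s=(\tau_2,\chi_2)$; $s$ lies on the spacelike geodesic orthogonal to $\beta_1$ at $(t^-,\chi_1)$. Velocities: $v_{\mathrm{Fermi}1}$ of $\beta_1$ relative to $\beta_0$ at proper time $\tau_0$ (at $q$), $v_{\mathrm{Fermi}2}$ of $\beta_2$ relative to $\beta_1$ at proper time $t^-$ (at $s$), $v_{\mathrm{Fermi}3}$ of $\beta_2$ relative to $\beta_0$ at proper time $\tau_0$ (at $s$). Then in each scenario $$1+\frac{v_{\mathrm{Fermi}3}^{2}}{g_{\tau_0\tau_0}(s)}=\frac{a^{2}(t^{-})}{a^{2}(t^{+})}\left(1+\frac{v_{\mathrm{Fermi}1}^{2}}{g_{\tau_0\tau_0}(q)}\right)\left(1+\frac{v_{\mathrm{Fermi}2}^{2}}{g_{\tau_1\tau_1}(\hat s)}\right),$$ where $\hat s=s'$ in Scenario I and $\hat s=s$ in Scenarios II and III, and each metric coefficient is evaluated at the indicated event expressed in the Fermi coordinates of the corresponding observer ($g_{\tau_0\tau_0}$ for $\beta_0$, $g_{\tau_1\tau_1}$ for $\beta_1$).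
   Context: For a comoving observer $\beta_j$ ($\chi=\chi_j$), Fermi coordinates $(\tau_j,\rho)$ are defined near $\beta_j$: $\tau_j$ labels the spacelike geodesic orthogonal to $\beta_j$ at $(\tau_j,\chi_j)$ (the Fermi slice of events simultaneous with $\beta_j(\tau_j)$), and $\rho$ is the signed proper distance along it from $\beta_j$. In these coordinates the metric has the form $ds^2=g_{\tau_j\tau_j}(\tau_j,\rho)\,d\tau_j^2+d\rho^2$ with $g_{\tau_j\tau_j}<0$. The Fermi velocity of a radially moving particle relative to $\beta_j$ at proper time $\tau_j$ is $v_{\mathrm{Fermi}}=d\rho/d\tau_j$ along the particle's path. The kinematic velocity of a comoving particle at coordinate $\chi$ relative to $\beta_j$ at proper time $\tau$ (obtained by parallel transporting the particle's 4-velocity along the orthogonal spacelike geodesic to $(\tau,\chi_j)$ and writing it as $\gamma(u+V)$ with $u=\partial_t$, $V\perp u$, $V=v_{\mathrm{kin}}a(\tau)^{-1}\partial_\chi$) equals $\mathrm{sgn}(\chi-\chi_j)\sqrt{1-a^2(t)/a^2(\tau)}$, where $(t,\chi)$ is the event where the geodesic meets the particle. It is known that at an event with Fermi coordinates $(\tau,\rho)$, $v_{\mathrm{Fermi}}=\sqrt{-g_{\tau\tau}(\tau,\rho)}\,v_{\mathrm{kin}}$. *)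

(* Defs.v *)
From Stdlib Require Import Reals.
From Coquelicot Require Import Coquelicot.
Open Scope R_scope.

(** Two-dimensional Robertson–Walker spacetime  ds^2 = -dt^2 + a(t)^2 dchi^2,
    events are pairs (t, chi) with t > 0.  Comoving observer beta_j : chi = chi_j. *)

Definition smooth_pos (a : R -> R) : Prop :=
  forall (n : nat) (t : R), 0 < t -> ex_derive_n a n t.
Definition positive_pos (a : R -> R) : Prop := forall t, 0 < t -> 0 < a t.
Definition increasing_pos (a : R -> R) : Prop :=
  forall s t, 0 < s -> s < t -> a s < a t.

Definition pd1 (f : R -> R -> R) : R -> R -> R :=
  fun x y => Derive (fun z => f z y) x.
Definition pd2 (f : R -> R -> R) : R -> R -> R :=
  fun x y => Derive (fun z => f x z) y.

Definition C2_at (f : R -> R -> R) (x y : R) : Prop :=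
  locally_2d (fun u v =>
     ex_derive (fun z => f z v) u /\ ex_derive (fun z => f u z) v /\
     ex_derive (fun z => pd1 f z v) u /\ ex_derive (fun z => pd1 f u z) v /\
     ex_derive (fun z => pd2 f z v) u /\ ex_derive (fun z => pd2 f u z) v) x y /\
  continuity_2d_pt f x y /\
  continuity_2d_pt (pd1 f) x y /\ continuity_2d_pt (pd2 f) x y /\
  continuity_2d_pt (pd1 (pd1 f)) x y /\ continuity_2d_pt (pd2 (pd1 f)) x y /\
  continuity_2d_pt (pd1 (pd2 f)) x y /\ continuity_2d_pt (pd2 (pd2 f)) x y.

(** Metric coefficient g_{tau tau} in Fermi coordinates (tau, rho), where the
    event with Fermi coordinates (tau, rho) has RW coordinates (T tau rho, X tau rho):
    g_{tau tau} = g(d_tau, d_tau) = -(d_tau T)^2 + a(T)^2 (d_tau X)^2. *)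
Definition gFermi (a : R -> R) (T X : R -> R -> R) (tau rho : R) : R :=
  - (pd1 T tau rho) ^ 2 + (a (T tau rho)) ^ 2 * (pd1 X tau rho) ^ 2.

(** The event with Fermi
    coordinates (tau, rho) is (t, chi) = (T tau rho, X tau rho):
    for each tau, rho |-> (T tau rho, X tau rho) is the spacelike geodesic
    orthogonal to the observer at (tau, chij), parametrized by signed proper
    distance rho (rho increasing in the +chi direction); the chart is C^2 and
    g_{tau tau} < 0 on the domain. *)
Definition FermiChart (a : R -> R) (chij : R) (D : R -> R -> Prop)
    (T X : R -> R -> R) : Prop :=
  (forall tau rho, D tau rho -> locally_2d D tau rho) /\
  (forall tau rho, D tau rho ->
     forall r, Rmin 0 rho <= r <= Rmax 0 rho -> D tau r) /\
  (forall tau rho, D tau rho -> 0 < T tau rho) /\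
  (* rho = 0 is the observer's worldline at proper time tau; the geodesic
     starts there with unit tangent orthogonal to d_t, i.e. (0, 1/a(tau)) *)
  (forall tau, D tau 0 ->
     T tau 0 = tau /\ X tau 0 = chij /\
     pd2 T tau 0 = 0 /\ pd2 X tau 0 = 1 / a tau) /\
  (* geodesic equations of -dt^2 + a(t)^2 dchi^2 along each slice *)
  (forall tau rho, D tau rho ->
     pd2 (pd2 T) tau rho
       + a (T tau rho) * Derive a (T tau rho) * (pd2 X tau rho) ^ 2 = 0 /\
     pd2 (pd2 X) tau rho
       + 2 * (Derive a (T tau rho) / a (T tau rho)) * pd2 T tau rho * pd2 X tau rho
       = 0) /\
  (forall tau rho, D tau rho -> C2_at T tau rho /\ C2_at X tau rho) /\
  (* metric form ds^2 = g_{tau tau} dtau^2 + drho^2 with g_{tau tau} < 0 *)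
  (forall tau rho, D tau rho -> gFermi a T X tau rho < 0).

(** Fermi velocity v = d rho / d tau, at proper time tau, of the comoving
    particle chi = chik relative to the observer whose Fermi chart is (D,T,X);
    rho0 is the Fermi coordinate of the particle at proper time tau.
    The particle's path in Fermi coordinates is tau' |-> (tau', r tau'). *)
Definition FermiVel (D : R -> R -> Prop) (X : R -> R -> R) (chik tau rho0 v : R)
    : Prop :=
  exists r : R -> R,
    r tau = rho0 /\
    locally tau (fun s => D s (r s) /\ X s (r s) = chik) /\
    is_derive r tau v.

(* Main.v *)
Require Import Defs.
From Stdlib Require Import Reals Lra.
From Coquelicot Require Import Coquelicot.
Open Scope R_scope.

Lemma DL_pol_1 f x y dx dy :
  DL_pol 1 f x y dx dy = f x y + (pd1 f x y * dx + pd2 f x y * dy).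
Proof.
  unfold DL_pol, differential, partial_derive, pd1, pd2, Binomial.C. simpl.
  field.
Qed.

Lemma C2_diff_n f u v : C2_at f u v -> ex_diff_n f 2 u v.
Proof.
  intros [HL [c0 [c1 [c2 [c11 [c21 [c12 c22]]]]]]].
  destruct (locally_2d_singleton _ _ _ HL) as [d1 [d2 [d11 [d12 [d21 d22]]]]].
  simpl. repeat split; assumption.
Qed.

Lemma diff_of_C2 f x y : locally_2d (fun u v => C2_at f u v) x y ->
  differentiable_pt_lim f x y (pd1 f x y) (pd2 f x y).
Proof.
  intros H.
  assert (HT : DL_regular_n f 1 x y).
  { apply Taylor_Lagrange_2d. eapply locally_2d_impl; [|exact H].
    apply locally_2d_forall. intros u v. apply C2_diff_n. }
  destruct HT as [K [d Hd]].
  intros eps.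
  assert (Hp : 0 < Rmin d (eps / (Rabs K + 1))).
  { apply Rmin_pos. apply cond_pos. apply Rdiv_lt_0_compat. apply cond_pos.
    pose proof (Rabs_pos K); lra. }
  exists (mkposreal _ Hp). intros u v Hu Hv. simpl in Hu, Hv.
  assert (Hu1 : Rabs (u - x) < d) by (eapply Rlt_le_trans; [exact Hu| apply Rmin_l]).
  assert (Hv1 : Rabs (v - y) < d) by (eapply Rlt_le_trans; [exact Hv| apply Rmin_l]).
  specialize (Hd u v Hu1 Hv1). rewrite DL_pol_1 in Hd.
  set (M := Rmax (Rabs (u - x)) (Rabs (v - y))) in *.
  assert (HM0 : 0 <= M) by (unfold M; eapply Rle_trans; [apply Rabs_pos|apply Rmax_l]).
  assert (HM : M < eps / (Rabs K + 1)).
  { unfold M. apply Rmax_case; [eapply Rlt_le_trans; [exact Hu|apply Rmin_r]|eapply Rlt_le_trans; [exact Hv|apply Rmin_r]]. }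
  assert (HK : K * M ^ 2 <= (Rabs K + 1) * M * M).
  { pose proof (Rle_abs K). simpl. nra. }
  assert (HK2 : (Rabs K + 1) * M <= eps).
  { pose proof (Rabs_pos K).
    apply Rmult_lt_compat_l with (r := Rabs K + 1) in HM; [|lra].
    replace ((Rabs K + 1) * (eps / (Rabs K + 1))) with (pos eps) in HM by (field; lra).
    lra. }
  replace (f u v - f x y - (pd1 f x y * (u - x) + pd2 f x y * (v - y)))
    with (f u v - (f x y + (pd1 f x y * (u - x) + pd2 f x y * (v - y)))) by ring.
  eapply Rle_trans; [exact Hd|]. nra.
Qed.

Lemma a_der a : smooth_pos a -> forall t, 0 < t -> ex_derive a t.
Proof. intros Hs t Ht. exact (Hs 1%nat t Ht). Qed.

Lemma const_on_slice (F : R -> R) rho :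
  (forall c, Rmin 0 rho <= c <= Rmax 0 rho -> is_derive F c 0) -> F rho = F 0.
Proof.
  intros H.
  destruct (MVT_abs F (fun _ => 0) 0 rho) as [c [Hc _]].
  { intros c Hc. apply is_derive_Reals. auto. }
  rewrite Rabs_R0, Rmult_0_l in Hc.
  destruct (Req_dec (F rho - F 0) 0) as [E|E]; [lra|].
  exfalso. apply (Rabs_no_R0 _ E). exact Hc.
Qed.

Lemma conserve a chij D T X tau rho : smooth_pos a -> positive_pos a ->
  FermiChart a chij D T X -> D tau rho ->
  -(pd2 T tau rho)^2 + (a (T tau rho))^2 * (pd2 X tau rho)^2 = 1 /\
  (a (T tau rho))^2 * pd2 X tau rho = a tau.
Proof.
  intros Hs Hp [Hopen [Hint [Hpos [Hinit [Hgeo [Hreg Hneg]]]]]] HD.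
  assert (HD0 : D tau 0).
  { apply (Hint _ _ HD). split; [apply Rmin_l|apply Rmax_l]. }
  destruct (Hinit tau HD0) as [I1 [I2 [I3 I4]]].
  assert (Htau : 0 < tau) by (rewrite <- I1; apply Hpos; auto).
  pose proof (Hp tau Htau) as Hatau.
  assert (Hder : forall c, Rmin 0 rho <= c <= Rmax 0 rho ->
     ex_derive (fun x => pd2 T tau x) c /\ ex_derive a (T tau c) /\
     ex_derive (fun x => T tau x) c /\ ex_derive (fun x => pd2 X tau x) c /\
     0 < a (T tau c) /\
     pd2 (pd2 T) tau c + a (T tau c) * Derive a (T tau c) * (pd2 X tau c) ^ 2 = 0 /\
     pd2 (pd2 X) tau c + 2 * (Derive a (T tau c) / a (T tau c)) * pd2 T tau c * pd2 X tau c = 0).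
  { intros c Hc. assert (HDc : D tau c) by (apply (Hint _ _ HD); auto).
    destruct (Hreg _ _ HDc) as [[HT _] [HX _]].
    destruct (locally_2d_singleton _ _ _ HT) as [t1 [t2 [t3 [t4 [t5 t6]]]]].
    destruct (locally_2d_singleton _ _ _ HX) as [x1 [x2 [x3 [x4 [x5 x6]]]]].
    destruct (Hgeo _ _ HDc) as [g1 g2].
    repeat split; auto; try (apply a_der; auto); try (apply Hp; auto). }
  split.
  - assert (E := const_on_slice (fun z => -(pd2 T tau z)^2 + (a (T tau z))^2 * (pd2 X tau z)^2) rho).
    rewrite E. rewrite I1, I3, I4. field. lra.
    intros c Hc. destruct (Hder c Hc) as [d1 [d2 [d3 [d4 [d5 [g1 g2]]]]]].
    auto_derive. tauto.
    change (Derive (fun x => pd2 T tau x) c) with (pd2 (pd2 T) tau c) .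
    change (Derive (fun x => pd2 X tau x) c) with (pd2 (pd2 X) tau c) .
    change (Derive (fun x => T tau x) c) with (pd2 T tau c) .
    change (Derive (fun x => a x)) with (Derive a).
    set (al := a (T tau c)) in *. set (da := Derive a (T tau c)) in *.
    replace (pd2 (pd2 T) tau c) with (- (al * da * (pd2 X tau c)^2)) by lra.
    replace (pd2 (pd2 X) tau c) with (- (2 * (da / al) * pd2 T tau c * pd2 X tau c)) by lra.
    field. lra.
  - assert (E := const_on_slice (fun z => (a (T tau z))^2 * pd2 X tau z) rho).
    rewrite E. rewrite I1, I4. field. lra.
    intros c Hc. destruct (Hder c Hc) as [d1 [d2 [d3 [d4 [d5 [g1 g2]]]]]].
    auto_derive. tauto.
    change (Derive (fun x => pd2 X tau x) c) with (pd2 (pd2 X) tau c) .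
    change (Derive (fun x => T tau x) c) with (pd2 T tau c) .
    change (Derive (fun x => a x)) with (Derive a).
    set (al := a (T tau c)) in *. set (da := Derive a (T tau c)) in *.
    replace (pd2 (pd2 X) tau c) with (- (2 * (da / al) * pd2 T tau c * pd2 X tau c)) by lra.
    field. lra.
Qed.

Lemma schwarz_C2 f x y : C2_at f x y -> pd2 (pd1 f) x y = pd1 (pd2 f) x y.
Proof.
  intros [HL [c0 [c1 [c2 [c11 [c21 [c12 c22]]]]]]].
  symmetry. apply Schwarz; [|exact c12|exact c21].
  eapply locally_2d_impl; [|exact HL]. apply locally_2d_forall.
  intros u v [h1 [h2 [h3 [h4 [h5 h6]]]]]. repeat split; assumption.
Qed.

Lemma tau_ident a chij D T X tau c : smooth_pos a -> positive_pos a ->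
  FermiChart a chij D T X -> D tau c ->
  - pd2 T tau c * pd1 (pd2 T) tau c + a (T tau c)^2 * pd2 X tau c * pd1 (pd2 X) tau c
  + a (T tau c) * Derive a (T tau c) * pd1 T tau c * (pd2 X tau c)^2 = 0.
Proof.
  intros Hs Hp HF HD.
  pose proof HF as [Hopen [Hint [Hpos [Hinit [Hgeo [Hreg Hneg]]]]]].
  destruct (Hreg _ _ HD) as [[HT _] [HX _]].
  destruct (locally_2d_singleton _ _ _ HT) as [t1 [t2 [t3 [t4 [t5 t6]]]]].
  destruct (locally_2d_singleton _ _ _ HX) as [x1 [x2 [x3 [x4 [x5 x6]]]]].
  assert (Hloc : locally tau (fun z => D z c)).
  { apply (locally_2d_1d_const_y D). apply Hopen; auto. }
  set (phi := fun z => -(pd2 T z c)^2 + (a (T z c))^2 * (pd2 X z c)^2).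
  assert (H0 : is_derive phi tau 0).
  { apply is_derive_ext_loc with (f := fun _ => 1).
    - eapply filter_imp; [|exact Hloc]. intros z Hz. unfold phi.
      symmetry. apply (conserve a chij D T X z c Hs Hp HF Hz).
    - apply (is_derive_const 1). }
  assert (H1 : is_derive phi tau
    (-(2 * pd2 T tau c * pd1 (pd2 T) tau c) + (2 * a (T tau c) * Derive a (T tau c) * pd1 T tau c * (pd2 X tau c)^2
      + a (T tau c)^2 * (2 * pd2 X tau c * pd1 (pd2 X) tau c)))).
  { unfold phi. auto_derive.
    - repeat split; auto. apply a_der; auto.
    - change (Derive (fun x => pd2 T x c) tau) with (pd1 (pd2 T) tau c).
      change (Derive (fun x => pd2 X x c) tau) with (pd1 (pd2 X) tau c).
      change (Derive (fun x => T x c) tau) with (pd1 T tau c).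
      change (Derive (fun x => a x)) with (Derive a).
      ring. }
  pose proof (is_derive_unique _ _ _ H0) as E0.
  pose proof (is_derive_unique _ _ _ H1) as E1.
  rewrite E0 in E1. lra.
Qed.

Lemma cross a chij D T X tau rho : smooth_pos a -> positive_pos a ->
  FermiChart a chij D T X -> D tau rho ->
  - pd1 T tau rho * pd2 T tau rho + a (T tau rho)^2 * pd1 X tau rho * pd2 X tau rho = 0.
Proof.
  intros Hs Hp HF HD.
  pose proof HF as [Hopen [Hint [Hpos [Hinit [Hgeo [Hreg Hneg]]]]]].
  assert (HD0 : D tau 0).
  { apply (Hint _ _ HD). split; [apply Rmin_l|apply Rmax_l]. }
  destruct (Hinit tau HD0) as [I1 [I2 [I3 I4]]].
  assert (HX0 : pd1 X tau 0 = 0).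
  { assert (Hloc : locally tau (fun z => D z 0)).
    { apply (locally_2d_1d_const_y D). apply Hopen; auto. }
    assert (Hd : is_derive (fun z => X z 0) tau 0).
    { apply is_derive_ext_loc with (f := fun _ => chij).
      - eapply filter_imp; [|exact Hloc]. intros z Hz.
        symmetry. apply (Hinit z Hz).
      - apply (is_derive_const chij). }
    exact (is_derive_unique _ _ _ Hd). }
  assert (E := const_on_slice (fun z => - pd1 T tau z * pd2 T tau z + a (T tau z)^2 * pd1 X tau z * pd2 X tau z) rho).
  rewrite E. rewrite I3, HX0. ring.
  intros c Hc. assert (HDc : D tau c) by (apply (Hint _ _ HD); auto).
  destruct (Hreg _ _ HDc) as [[HT HT'] [HX HX']].
  destruct (locally_2d_singleton _ _ _ HT) as [t1 [t2 [t3 [t4 [t5 t6]]]]].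
  destruct (locally_2d_singleton _ _ _ HX) as [x1 [x2 [x3 [x4 [x5 x6]]]]].
  destruct (Hgeo _ _ HDc) as [g1 g2].
  pose proof (schwarz_C2 T tau c (proj1 (Hreg _ _ HDc))) as ST.
  pose proof (schwarz_C2 X tau c (proj2 (Hreg _ _ HDc))) as SX.
  pose proof (tau_ident a chij D T X tau c Hs Hp HF HDc) as Id.
  assert (Hal : 0 < a (T tau c)) by (apply Hp; auto).
  auto_derive.
  - repeat split; auto. apply a_der; auto.
  - change (Derive (fun x => pd1 T tau x) c) with (pd2 (pd1 T) tau c).
    change (Derive (fun x => pd1 X tau x) c) with (pd2 (pd1 X) tau c).
    change (Derive (fun x => pd2 T tau x) c) with (pd2 (pd2 T) tau c).
    change (Derive (fun x => pd2 X tau x) c) with (pd2 (pd2 X) tau c).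
    change (Derive (fun x => T tau x) c) with (pd2 T tau c).
    change (Derive (fun x => a x)) with (Derive a).
    rewrite ST, SX.
    set (al := a (T tau c)) in *. set (da := Derive a (T tau c)) in *.
    replace (pd2 (pd2 T) tau c) with (- (al * da * (pd2 X tau c)^2)) by lra.
    replace (pd2 (pd2 X) tau c) with (- (2 * (da / al) * pd2 T tau c * pd2 X tau c)) by lra.
    etransitivity; [|exact Id]. field. lra.
Qed.

Lemma vel a chij D T X chik tau rho v :
  FermiChart a chij D T X -> D tau rho -> FermiVel D X chik tau rho v ->
  pd1 X tau rho + pd2 X tau rho * v = 0.
Proof.
  intros [Hopen [Hint [Hpos [Hinit [Hgeo [Hreg Hneg]]]]]] HD [r [Hr [Hloc Hd]]].
  assert (Hdiff : differentiable_pt_lim X tau rho (pd1 X tau rho) (pd2 X tau rho)).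
  { apply diff_of_C2. eapply locally_2d_impl; [|exact (Hopen _ _ HD)].
    apply locally_2d_forall. intros u w Hu. exact (proj2 (Hreg _ _ Hu)). }
  rewrite <- Hr in Hdiff.
  pose proof (derivable_pt_lim_comp_2d X (fun t => t) r tau _ _ 1 v Hdiff
    (derivable_pt_lim_id tau) (proj1 (is_derive_Reals _ _ _) Hd)) as H1.
  apply is_derive_Reals in H1. simpl in H1.
  assert (H0 : is_derive (fun t => X t (r t)) tau 0).
  { apply is_derive_ext_loc with (f := fun _ => chik).
    - eapply filter_imp; [|exact Hloc]. intros z [_ Hz]. auto.
    - apply (is_derive_const chik). }
  pose proof (is_derive_unique _ _ _ H0) as E0.
  pose proof (is_derive_unique _ _ _ H1) as E1.
  rewrite Hr in E1. assert (Z : pd1 X tau rho * 1 + pd2 X tau rho * v = 0) by (rewrite <- E1; exact E0). lra.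
Qed.

Lemma core a chij D T X chik tau rho v : smooth_pos a -> positive_pos a ->
  FermiChart a chij D T X -> D tau rho -> FermiVel D X chik tau rho v ->
  0 < tau /\ 0 < T tau rho /\
  1 + v ^ 2 / gFermi a T X tau rho = (a (T tau rho))^2 / (a tau)^2.
Proof.
  intros Hs Hp HF HD HV.
  pose proof HF as [Hopen [Hint [Hpos [Hinit [Hgeo [Hreg Hneg]]]]]].
  assert (HD0 : D tau 0).
  { apply (Hint _ _ HD). split; [apply Rmin_l|apply Rmax_l]. }
  destruct (Hinit tau HD0) as [I1 _].
  assert (Htau : 0 < tau) by (rewrite <- I1; apply Hpos; auto).
  assert (Ht : 0 < T tau rho) by auto.
  split; [exact Htau|split; [exact Ht|]].
  pose proof (Hp _ Htau) as HA. pose proof (Hp _ Ht) as Hal.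
  destruct (conserve a chij D T X tau rho Hs Hp HF HD) as [U G].
  pose proof (cross a chij D T X tau rho Hs Hp HF HD) as C.
  pose proof (vel a chij D T X chik tau rho v HF HD HV) as V.
  pose proof (Hneg _ _ HD) as Hneg0.
  unfold gFermi in *.
  set (al := a (T tau rho)) in *. set (A := a tau) in *.
  set (Tr := pd2 T tau rho) in *. set (Xr := pd2 X tau rho) in *.
  set (Tt := pd1 T tau rho) in *. set (Xt := pd1 X tau rho) in *.
  assert (Hxt : Xt = - Xr * v) by lra.
  assert (Hc : Tt * Tr = - al^2 * Xr^2 * v) by (rewrite Hxt in C; nra).
  assert (Hu : al^2 * Xr^2 = 1 + Tr^2) by lra.
  set (g := - Tt ^ 2 + al ^ 2 * Xt ^ 2) in *.
  assert (Key : g * A^2 + v^2 * A^2 = al^2 * g).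
  { rewrite <- G.
    assert (Hgg : g = -Tt^2 + (al^2*Xr^2)*v^2) by (unfold g; rewrite Hxt; ring).
    assert (E1 : g*(al^2*Xr)^2 + v^2*(al^2*Xr)^2 - al^2*g = al^2*(g*(al^2*Xr^2-1) + v^2*(al^2*Xr^2))) by ring.
    assert (E2 : g*(al^2*Xr^2-1) + v^2*(al^2*Xr^2) = 0).
    { rewrite Hgg. transitivity (-(Tt*Tr)^2 + (al^2*Xr^2)*v^2*(al^2*Xr^2)).
      - rewrite Hu. ring.
      - rewrite Hc. ring. }
    rewrite E2 in E1. lra. }
  assert (Hgn : g <> 0) by lra. assert (HAn : A^2 <> 0) by (apply pow_nonzero; lra).
  replace (1 + v^2/g) with ((g*A^2 + v^2*A^2)/(g*A^2)) by (field; repeat split; lra).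
  rewrite Key. field; repeat split; lra.
Qed.

Ltac usecore Hs Hp HF HD HV :=
  let H := fresh "K" in
  pose proof (core _ _ _ _ _ _ _ _ _ Hs Hp HF HD HV) as H;
  destruct H as [? [? H]].

Theorem corollary1 (a : R -> R) (chi1 chi2 : R) :
  smooth_pos a -> positive_pos a -> increasing_pos a ->
  (* Scenario I *)
  (forall (tau0 tau1 tm tp : R)
          (D0 : R -> R -> Prop) (T0 X0 : R -> R -> R)
          (D1 : R -> R -> Prop) (T1 X1 : R -> R -> R)
          (rq rs rs' v1 v2 v3 : R),
     0 < tau0 ->
     FermiChart a 0 D0 T0 X0 -> FermiChart a chi1 D1 T1 X1 ->
     D0 tau0 rq -> T0 tau0 rq = tau1 -> X0 tau0 rq = chi1 ->
     D0 tau0 rs -> T0 tau0 rs = tm -> X0 tau0 rs = chi2 ->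
     D1 tau1 rs' -> T1 tau1 rs' = tp -> X1 tau1 rs' = chi2 ->
     FermiVel D0 X0 chi1 tau0 rq v1 ->
     FermiVel D1 X1 chi2 tau1 rs' v2 ->
     FermiVel D0 X0 chi2 tau0 rs v3 ->
     1 + v3 ^ 2 / gFermi a T0 X0 tau0 rs =
       (a tm) ^ 2 / (a tp) ^ 2
       * (1 + v1 ^ 2 / gFermi a T0 X0 tau0 rq)
       * (1 + v2 ^ 2 / gFermi a T1 X1 tau1 rs')) /\
  (* Scenario II *)
  (forall (tm tp tau1 tau2 : R)
          (D0 : R -> R -> Prop) (T0 X0 : R -> R -> R)
          (D1 : R -> R -> Prop) (T1 X1 : R -> R -> R)
          (rq rs rs0 v1 v2 v3 : R),
     0 < tm -> 0 < tp ->
     FermiChart a 0 D0 T0 X0 -> FermiChart a chi1 D1 T1 X1 ->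
     D0 tm rq -> T0 tm rq = tau1 -> X0 tm rq = chi1 ->
     D1 tau1 rs -> T1 tau1 rs = tau2 -> X1 tau1 rs = chi2 ->
     D0 tp rs0 -> T0 tp rs0 = tau2 -> X0 tp rs0 = chi2 ->
     FermiVel D0 X0 chi1 tm rq v1 ->
     FermiVel D1 X1 chi2 tau1 rs v2 ->
     FermiVel D0 X0 chi2 tp rs0 v3 ->
     1 + v3 ^ 2 / gFermi a T0 X0 tp rs0 =
       (a tm) ^ 2 / (a tp) ^ 2
       * (1 + v1 ^ 2 / gFermi a T0 X0 tm rq)
       * (1 + v2 ^ 2 / gFermi a T1 X1 tau1 rs)) /\
  (* Scenario III *)
  (forall (tau0 tm tp tau2 : R)
          (D0 : R -> R -> Prop) (T0 X0 : R -> R -> R)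
          (D1 : R -> R -> Prop) (T1 X1 : R -> R -> R)
          (rq rs rs1 v1 v2 v3 : R),
     0 < tau0 -> 0 < tm ->
     FermiChart a 0 D0 T0 X0 -> FermiChart a chi1 D1 T1 X1 ->
     D0 tau0 rq -> T0 tau0 rq = tp -> X0 tau0 rq = chi1 ->
     D0 tau0 rs -> T0 tau0 rs = tau2 -> X0 tau0 rs = chi2 ->
     D1 tm rs1 -> T1 tm rs1 = tau2 -> X1 tm rs1 = chi2 ->
     FermiVel D0 X0 chi1 tau0 rq v1 ->
     FermiVel D1 X1 chi2 tm rs1 v2 ->
     FermiVel D0 X0 chi2 tau0 rs v3 ->
     1 + v3 ^ 2 / gFermi a T0 X0 tau0 rs =
       (a tm) ^ 2 / (a tp) ^ 2
       * (1 + v1 ^ 2 / gFermi a T0 X0 tau0 rq)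
       * (1 + v2 ^ 2 / gFermi a T1 X1 tm rs1)).
Proof.
  intros Hs Hp Hi. split; [|split].
  - intros tau0 tau1 tm tp D0 T0 X0 D1 T1 X1 rq rs rs' v1 v2 v3 H0 HF0 HF1
      Dq Tq Xq Ds Ts Xs Ds' Ts' Xs' V1 V2 V3.
    destruct (core _ _ _ _ _ _ _ _ _ Hs Hp HF0 Dq V1) as [P1 [Q1 K1]].
    destruct (core _ _ _ _ _ _ _ _ _ Hs Hp HF1 Ds' V2) as [P2 [Q2 K2]].
    destruct (core _ _ _ _ _ _ _ _ _ Hs Hp HF0 Ds V3) as [P3 [Q3 K3]].
    rewrite K1, K2, K3. rewrite Tq, Ts, Ts' in *.
    pose proof (Hp _ P1). pose proof (Hp _ P2). pose proof (Hp _ Q2). pose proof (Hp _ Q3).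
    field. repeat split; lra.
  - intros tm tp tau1 tau2 D0 T0 X0 D1 T1 X1 rq rs rs0 v1 v2 v3 Hm Hpp HF0 HF1
      Dq Tq Xq Ds Ts Xs Ds0 Ts0 Xs0 V1 V2 V3.
    destruct (core _ _ _ _ _ _ _ _ _ Hs Hp HF0 Dq V1) as [P1 [Q1 K1]].
    destruct (core _ _ _ _ _ _ _ _ _ Hs Hp HF1 Ds V2) as [P2 [Q2 K2]].
    destruct (core _ _ _ _ _ _ _ _ _ Hs Hp HF0 Ds0 V3) as [P3 [Q3 K3]].
    rewrite K1, K2, K3. rewrite Tq, Ts, Ts0 in *.
    pose proof (Hp _ P1). pose proof (Hp _ P2). pose proof (Hp _ Q2). pose proof (Hp _ P3).
    field. repeat split; lra.
  - intros tau0 tm tp tau2 D0 T0 X0 D1 T1 X1 rq rs rs1 v1 v2 v3 H0 Hm HF0 HF1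
      Dq Tq Xq Ds Ts Xs Ds1 Ts1 Xs1 V1 V2 V3.
    destruct (core _ _ _ _ _ _ _ _ _ Hs Hp HF0 Dq V1) as [P1 [Q1 K1]].
    destruct (core _ _ _ _ _ _ _ _ _ Hs Hp HF1 Ds1 V2) as [P2 [Q2 K2]].
    destruct (core _ _ _ _ _ _ _ _ _ Hs Hp HF0 Ds V3) as [P3 [Q3 K3]].
    rewrite K1, K2, K3. rewrite Tq, Ts, Ts1 in *.
    pose proof (Hp _ P1). pose proof (Hp _ P2). pose proof (Hp _ Q1). pose proof (Hp _ Q2).
    field. repeat split; lra.
Qed.
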